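(* Let $X$ be a compact metrizable countable space and $f:X\to X$ a continuous function such that $(X,f)$ is transitive. If $f^p$ is continuous for every $p\in\mathbb N^*$, then the set $P_f$ is finite.
   Context: $(X,f)$ is transitive if some point has dense orbit $\{f^n(x):n\in\mathbb N\}$. $\mathbb N^*$ is the set of free ultrafilters on $\mathbb N$; for $p\in\mathbb N^*$ the $p$-iterate is $f^p(x)=p\text{-}\lim_{n\to\infty}f^n(x)$, where $y=p\text{-}\lim x_n$ means $\{n: x_n\in V\}\in p$ for every neighborhood $V$ of $y$. A point $x$ is periodic if $f^n(x)=x$ for some $n\ge1$, with period $\min\{n\ge1:f^n(x)=x\}$; $P_f$ is the set of all periods of periodic points of $f$. *)

(* Defs.v *)
From HB Require Import structures.
From mathcomp Require Import all_boot all_order all_algebra.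
From mathcomp Require Import all_classical all_reals all_analysis.
Set Implicit Arguments. Unset Strict Implicit. Unset Printing Implicit Defensive.
Import Order.TTheory GRing.Theory Num.Theory.
Local Open Scope classical_set_scope.

Definition free_ultrafilter (p : set_system nat) : Prop :=
  UltraFilter p /\ \bigcap_(A in p) A = set0.

Definition plim {T : topologicalType} (p : set_system nat) (u : nat -> T) (y : T) :
  Prop := (u @ p) --> y.

Definition is_p_iterate {T : topologicalType} (f : T -> T) (p : set_system nat)
  (g : T -> T) : Prop := forall x, plim p (fun n => iter n f x) (g x).

Definition transitive_sys {T : topologicalType} (f : T -> T) : Prop :=
  exists x, closure (range (fun n => iter n f x)) = [set: T].

Definition has_period {T : Type} (f : T -> T) (x : T) (n : nat) : Prop :=
  (0 < n)%N /\ iter n f x = x /\ (forall m, (0 < m)%N -> iter m f x = x -> (n <= m)%N).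

Definition periods {T : Type} (f : T -> T) : set nat :=
  [set n | exists x, has_period f x n].

(* Main.v *)
Require Import Defs.
From HB Require Import structures.
From mathcomp Require Import all_boot all_order all_algebra.
From mathcomp Require Import all_classical all_reals all_analysis.
From mathcomp Require Import zify.
Local Open Scope classical_set_scope.

Lemma iter_cont (T : topologicalType) (f : T -> T) n :
  continuous f -> continuous (iter n f).
Proof.
move=> cf; elim: n => [|n IH] x /=; first exact: cvg_id.
exact: (continuous_comp (IH x) (cf _)).
Qed.

Lemma iter_comm (T : Type) (f : T -> T) n m x :
  iter n f (iter m f x) = iter m f (iter n f x).
Proof. by rewrite -!iterD addnC. Qed.

Lemma iter_mulper (T : Type) (f : T -> T) z m t :
  iter m f z = z -> iter (m * t) f z = z.
Proof.
move=> hz; elim: t => [|t IH]; first by rewrite muln0.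
by rewrite mulnS iterD IH hz.
Qed.

Lemma range_per_finite (T : Type) (f : T -> T) z m :
  (0 < m)%N -> iter m f z = z -> finite_set (range (fun i => iter i f z)).
Proof.
move=> mpos hz.
apply: (sub_finite_set _ (finite_image (fun i => iter i f z) (finite_II m))).
move=> _ [i _ <-]; exists (i %% m); first by rewrite /= ltn_pmod.
by rewrite {2}(divn_eq i m) addnC iterD mulnC iter_mulper.
Qed.

Theorem corollary4p3 (R : realType) (X : metricType R) (f : X -> X) :
  compact [set: X] ->
  countable [set: X] ->
  continuous f ->
  transitive_sys f ->
  (forall p : set_system nat, free_ultrafilter p ->
     exists g : X -> X, is_p_iterate f p g /\ continuous g) ->
  finite_set (periods f).
Proof.
move=> _ _ cf [x0 hx0] hp.
set u := fun n => iter n f x0.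
have [[k [y [kpos [yk ymin]]]]|Pe] := pselect (exists n, periods f n); last first.
  apply: (@sub_finite_set _ _ set0); last exact: finite_set0.
  by move=> n Pn; apply: Pe; exists n.
have claimA : forall V, nbhs y V -> forall N, exists n, (N <= n)%N /\ V (u n).
  move=> V hV N.
  have hV' : nbhs y (iter (k * N) f @^-1` V).
    have c := @iter_cont _ f (k * N) cf y.
    have e : iter (k * N) f y = y by apply: iter_mulper.
    move: c; rewrite /continuous_at e => c; exact: c _ hV.
  have : closure (range u) y by rewrite hx0.
  move=> /(_ _ hV') [_ [[m _ <-] hm]].
  exists (k * N + m); split; first by nia.
  by rewrite /u iterD.
pose D := [set NV : nat * set X | nbhs y NV.2].
pose B := fun NV : nat * set X => [set n | (NV.1 <= n)%N /\ NV.2 (u n)].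
have FF : Filter (filter_from D B).
  apply: filter_from_filter; first by exists (0%N, setT); exact: filterT.
  move=> [N V] [N' V'] /= hV hV'; exists (maxn N N', V `&` V').
    exact: filterI.
  by move=> n /= [/[!geq_max] /andP[? ?] [? ?]]; split; split.
have PF : ProperFilter (filter_from D B).
  apply: filter_from_proper => -[N V] /= hV.
  by have [n [? ?]] := claimA V hV N; exists n.
have [G [GU sFG]] := ultraFilterLemma PF.
have free : \bigcap_(A in G) A = set0.
  apply/seteqP; split => // n Hn.
  have : G (B (n.+1, setT)).
    by apply: sFG; exists (n.+1, setT) => //; exact: filterT.
  by move=> /Hn [/=]; rewrite ltnn.
have [g [hg cg]] := hp G (conj GU free).
have hy : plim G u y.
  move=> V hV; apply: sFG; exists (0%N, V) => //.
  by move=> n [_ ?].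
have Haus := @metric_hausdorff R X.
have orb : forall n, g (u n) = iter n f y.
  move=> n.
  have h1 := hg (u n).
  have h2 : plim G (fun m => iter m f (u n)) (iter n f y).
    have -> : (fun m => iter m f (u n)) = iter n f \o u.
      by apply: funext => m /=; rewrite /u iter_comm.
    rewrite /plim. apply: cvg_comp. exact: hy. exact: (@iter_cont _ f n cf y).
  exact: (cvg_unique Haus h1 h2).
have closed_fin : forall A : set X, finite_set A -> closed A.
  exact: (accessible_finite_set_closed.1 (hausdorff_accessible Haus)).
set S := range (fun i => iter i f y).
have cS : closed S by apply: closed_fin; exact: range_per_finite kpos yk.
have gS : forall z, S (g z).
  have cgS : closed (g @^-1` S) by exact: ((continuous_closedP g).1 cg S cS).
  have sub : range u `<=` g @^-1` S.
    by move=> _ [n _ <-]; rewrite /preimage /= orb; exists n.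
  move=> z; have : closure (range u) z by rewrite /u hx0.
  have e := (closure_id _).1 cgS; move/(closureS sub); rewrite -e; exact.
apply: (sub_finite_set _ (finite_II k.+1)) => n [z [npos [zn zmin]]].
have cT : closed (range (fun i => iter i f z)).
  by apply: closed_fin; exact: range_per_finite npos zn.
have gz : range (fun i => iter i f z) (g z).
  apply: (closed_cvg _ cT _ _ (hg z)).
  by apply: nearW => m; exists m.
have [a _ ha] := gz.
have [b _ hb] := gS z.
have zc : z = iter (n * a - a + b) f y.
  rewrite iterD hb -ha -iterD subnK ?iter_mulper //.
  by rewrite leq_pmull.
have zk : iter k f z = z.
  by rewrite {1}zc -iterD addnC iterD yk -zc.
by rewrite /= ltnS; exact: zmin.
Qed.
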